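(* Let $\theta\in\mathbb R\setminus\mathbb Q$. Then $H^1(\mathcal A_\theta^{alg},{}_{-1}\mathcal A_\theta^{alg*})=0$.
   Context: Let $\lambda=e^{2\pi i\theta}$. $\mathcal A_\theta^{alg}$ is the complex algebra of finite linear combinations $\sum a_{n,m}U_1^nU_2^m$ generated by invertible $U_1,U_2$ with $U_2U_1=\lambda U_1U_2$. Its linear dual $\mathcal A_\theta^{alg*}$ is identified with the space of formal series $\sum_{(n,m)\in\mathbb Z^2}\varphi_{n,m}U_1^nU_2^m$ with the standard bimodule structure. $\sigma$ is the automorphism $\sigma(U_j)=U_j^{-1}$, and ${}_{-1}\mathcal A_\theta^{alg*}$ is $\mathcal A_\theta^{alg*}$ with bimodule structure $\alpha\cdot a=\sigma(\alpha)a$, $a\cdot\alpha=a\alpha$. $H^\bullet$ is Hochschild cohomology. *)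

(* Defs.v *)
From Stdlib Require Import Reals ZArith List Lia Lra ClassicalEpsilon.
Open Scope R_scope.

Definition C := (R * R)%type.
Definition C0 : C := (0, 0).
Definition C1 : C := (1, 0).
Definition Cadd (x y : C) : C := (fst x + fst y, snd x + snd y).
Definition Cmul (x y : C) : C :=
  (fst x * fst y - snd x * snd y, fst x * snd y + snd x * fst y).
Definition Copp (x : C) : C := (- fst x, - snd x).
Definition Csub (x y : C) : C := Cadd x (Copp y).
Definition Cinv (x : C) : C :=
  let d := fst x * fst x + snd x * snd x in (fst x / d, - snd x / d).
Fixpoint Cpow (x : C) (n : nat) : C :=
  match n with O => C1 | S n => Cmul x (Cpow x n) end.
Definition Cpowz (x : C) (z : Z) : C :=
  match z with
  | Z0 => C1
  | Zpos p => Cpow x (Pos.to_nat p)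
  | Zneg p => Cinv (Cpow x (Pos.to_nat p))
  end.

Definition lam (theta : R) : C := (cos (2 * PI * theta), sin (2 * PI * theta)).

Lemma Cmul_0_r x : Cmul x C0 = C0.
Proof. unfold Cmul, C0; simpl; f_equal; ring. Qed.
Lemma Cmul_0_l x : Cmul C0 x = C0.
Proof. unfold Cmul, C0; simpl; f_equal; ring. Qed.
Lemma Cadd_0_0 : Cadd C0 C0 = C0.
Proof. unfold Cadd, C0; simpl; f_equal; ring. Qed.

(** * The algebra A_theta^alg :
    an element sum a_{n,m} U1^n U2^m is its finitely supported
    coefficient function (n,m) |-> a_{n,m}. *)
Definition finsupp (f : Z * Z -> C) : Prop :=
  exists N : nat, forall p : Z * Z,
    (Z.of_nat N < Z.abs (fst p))%Z \/ (Z.of_nat N < Z.abs (snd p))%Z -> f p = C0.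

Definition Aalg := { f : Z * Z -> C | finsupp f }.

Definition coef (a : Aalg) : Z * Z -> C := proj1_sig a.

Definition bnd (a : Aalg) : nat :=
  proj1_sig (constructive_indefinite_description _ (proj2_sig a)).

Lemma bnd_spec (a : Aalg) : forall p : Z * Z,
  (Z.of_nat (bnd a) < Z.abs (fst p))%Z \/ (Z.of_nat (bnd a) < Z.abs (snd p))%Z ->
  coef a p = C0.
Proof.
  unfold bnd, coef.
  destruct (constructive_indefinite_description _ (proj2_sig a)) as [N HN]; exact HN.
Qed.

Definition zrange (N : nat) : list Z :=
  map (fun k => (Z.of_nat k - Z.of_nat N)%Z) (seq 0 (2 * N + 1)).
Definition boxsum (N : nat) (F : Z * Z -> C) : C :=
  fold_right (fun q acc => Cadd (F q) acc) C0 (list_prod (zrange N) (zrange N)).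

Lemma fold_zero (F : Z * Z -> C) (l : list (Z * Z)) :
  (forall q, F q = C0) -> fold_right (fun q acc => Cadd (F q) acc) C0 l = C0.
Proof.
  intros H; induction l as [|q l IH]; simpl; [reflexivity|].
  rewrite IH, H; apply Cadd_0_0.
Qed.

(** product: (a_q U1^{q1} U2^{q2}) (b_r U1^{r1} U2^{r2})
      = lambda^{q2 r1} a_q b_r U1^{q1+r1} U2^{q2+r2}
    (from U2 U1 = lambda U1 U2). *)
Definition mulc (theta : R) (a b : Aalg) (p : Z * Z) : C :=
  boxsum (bnd a) (fun q =>
    Cmul (Cmul (Cpowz (lam theta) (snd q * (fst p - fst q))%Z) (coef a q))
         (coef b (fst p - fst q, snd p - snd q)%Z)).

Lemma mulc_finsupp theta a b : finsupp (mulc theta a b).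
Proof.
  exists (bnd a + bnd b)%nat. intros p Hp. unfold mulc, boxsum.
  apply fold_zero. intros q.
  destruct (Z_lt_le_dec (Z.of_nat (bnd a)) (Z.abs (fst q))) as [H1|H1].
  { rewrite (bnd_spec a q) by (left; exact H1). rewrite Cmul_0_r. apply Cmul_0_l. }
  destruct (Z_lt_le_dec (Z.of_nat (bnd a)) (Z.abs (snd q))) as [H2|H2].
  { rewrite (bnd_spec a q) by (right; exact H2). rewrite Cmul_0_r. apply Cmul_0_l. }
  rewrite (bnd_spec b). apply Cmul_0_r.
  simpl. rewrite Nat2Z.inj_add in Hp. lia.
Qed.

Definition Amul (theta : R) (a b : Aalg) : Aalg :=
  exist _ (mulc theta a b) (mulc_finsupp theta a b).

Lemma add_finsupp (a b : Aalg) : finsupp (fun p => Cadd (coef a p) (coef b p)).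
Proof.
  exists (bnd a + bnd b)%nat. intros p Hp. rewrite Nat2Z.inj_add in Hp.
  rewrite (bnd_spec a), (bnd_spec b) by lia. apply Cadd_0_0.
Qed.

Definition Aadd (a b : Aalg) : Aalg :=
  exist _ (fun p => Cadd (coef a p) (coef b p)) (add_finsupp a b).

Lemma scale_finsupp (c : C) (a : Aalg) : finsupp (fun p => Cmul c (coef a p)).
Proof.
  exists (bnd a). intros p Hp. rewrite (bnd_spec a) by exact Hp. apply Cmul_0_r.
Qed.

Definition Ascale (c : C) (a : Aalg) : Aalg :=
  exist _ (fun p => Cmul c (coef a p)) (scale_finsupp c a).

(** sigma(U_j) = U_j^{-1}; hence sigma(U1^n U2^m) = U1^{-n} U2^{-m}. *)
Lemma sigma_finsupp (a : Aalg) : finsupp (fun p => coef a (- fst p, - snd p)%Z).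
Proof.
  exists (bnd a). intros p Hp. apply bnd_spec. simpl. lia.
Qed.

Definition sigma (a : Aalg) : Aalg :=
  exist _ (fun p => coef a (- fst p, - snd p)%Z) (sigma_finsupp a).

(** * The linear dual A^* : C-linear functionals on A_theta^alg,
    with the standard bimodule structure (a.f.b)(x) = f(b x a).
    The twisted bimodule _{-1}A^* : alpha . f = sigma(alpha) . f, f . a = f a. *)
Definition is_linear_functional (f : Aalg -> C) : Prop :=
  (forall a b, f (Aadd a b) = Cadd (f a) (f b)) /\
  (forall c a, f (Ascale c a) = Cmul c (f a)).

Definition Dual := Aalg -> C.

Definition lact_tw (theta : R) (alpha : Aalg) (f : Dual) : Dual :=
  fun x => f (Amul theta x (sigma alpha)).
Definition ract (theta : R) (f : Dual) (a : Aalg) : Dual :=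
  fun x => f (Amul theta a x).

Definition is_cochain1 (D : Aalg -> Dual) : Prop :=
  (forall a, is_linear_functional (D a)) /\
  (forall a b x, D (Aadd a b) x = Cadd (D a x) (D b x)) /\
  (forall c a x, D (Ascale c a) x = Cmul c (D a x)).

Definition is_cocycle1 (theta : R) (D : Aalg -> Dual) : Prop :=
  forall a b x, D (Amul theta a b) x = Cadd (lact_tw theta a (D b) x) (ract theta (D a) b x).

Definition is_coboundary1 (theta : R) (D : Aalg -> Dual) : Prop :=
  exists phi : Dual, is_linear_functional phi /\
    forall a x, D a x = Csub (lact_tw theta a phi x) (ract theta phi a x).

Definition H1_twisted_dual_vanishes (theta : R) : Prop :=
  forall D, is_cochain1 D -> is_cocycle1 theta D -> is_coboundary1 theta D.

Definition irrational (theta : R) : Prop :=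
  ~ exists p q : Z, q <> 0%Z /\ theta = IZR p / IZR q.

(* Main.v *)
Require Import Defs.
From Stdlib Require Import Reals ZArith List Lia Lra ProofIrrelevance FunctionalExtensionality Classical.
Import Defs.
Open Scope R_scope.

Lemma C_ext (x y : C) : fst x = fst y -> snd x = snd y -> x = y.
Proof. destruct x, y; simpl; intros; subst; reflexivity. Qed.

Lemma Cring_theory : ring_theory C0 C1 Cadd Cmul Csub Copp (@eq C).
Proof.
  constructor; intros; unfold Csub, Cadd, Cmul, Copp, C0, C1;
  repeat match goal with x : C |- _ => destruct x end; simpl; f_equal; ring.
Qed.
Add Ring Cring : Cring_theory.

Definition ex (theta : R) (k : Z) : C :=
  (cos (2 * PI * theta * IZR k), sin (2 * PI * theta * IZR k)).

Lemma ex_add th a b : Cmul (ex th a) (ex th b) = ex th (a + b).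
Proof.
  unfold ex, Cmul; simpl. rewrite plus_IZR.
  replace (2 * PI * th * (IZR a + IZR b)) with (2 * PI * th * IZR a + 2 * PI * th * IZR b) by ring.
  rewrite cos_plus, sin_plus. f_equal; ring.
Qed.

Lemma ex0 th : ex th 0 = C1.
Proof. unfold ex, C1. rewrite Rmult_0_r, cos_0, sin_0. reflexivity. Qed.

Lemma ex_cancel th k z : Cmul (ex th k) z = C0 -> z = C0.
Proof.
  intros H. transitivity (Cmul (Cmul (ex th (-k)) (ex th k)) z).
  - rewrite ex_add. replace (-k + k)%Z with 0%Z by lia. rewrite ex0. ring.
  - rewrite <- (Cmul_0_r (ex th (-k))), <- H. ring.
Qed.

Lemma Cpow_lam th n : Cpow (lam th) n = ex th (Z.of_nat n).
Proof.
  induction n as [|n IH].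
  - simpl. symmetry. apply ex0.
  - simpl Cpow. rewrite IH. replace (lam th) with (ex th 1).
    + rewrite ex_add. f_equal. lia.
    + unfold ex, lam. rewrite Rmult_1_r. reflexivity.
Qed.

Lemma Cpowz_lam th k : Cpowz (lam th) k = ex th k.
Proof.
  destruct k as [|p|p]; simpl.
  - symmetry; apply ex0.
  - rewrite Cpow_lam, positive_nat_Z. reflexivity.
  - rewrite Cpow_lam, positive_nat_Z. unfold Cinv, ex. simpl.
    pose proof (sin2_cos2 (2 * PI * th * IZR (Z.pos p))) as Hs.
    unfold Rsqr in Hs.
    rewrite IZR_NEG. replace (2 * PI * th * - IZR (Z.pos p)) with (- (2 * PI * th * IZR (Z.pos p))) by ring.
    rewrite cos_neg, sin_neg.
    set (a := 2 * PI * th * IZR (Z.pos p)) in *.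
    replace (cos a * cos a + sin a * sin a) with 1 by lra.
    f_equal; field.
Qed.

Definition sumL (F : Z * Z -> C) (l : list (Z * Z)) : C :=
  fold_right (fun q acc => Cadd (F q) acc) C0 l.

Lemma sumL_app F l1 l2 : sumL F (l1 ++ l2) = Cadd (sumL F l1) (sumL F l2).
Proof. induction l1; simpl; [ring|]. rewrite IHl1. ring. Qed.

Lemma sumL_ext F G l : (forall q, In q l -> F q = G q) -> sumL F l = sumL G l.
Proof.
  induction l; simpl; intros H; [reflexivity|]. rewrite H, IHl; auto.
Qed.

Lemma sumL_add F G l : sumL (fun q => Cadd (F q) (G q)) l = Cadd (sumL F l) (sumL G l).
Proof. induction l; simpl; [ring|]. rewrite IHl. ring. Qed.

Lemma sumL_scale c F l : sumL (fun q => Cmul c (F q)) l = Cmul c (sumL F l).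
Proof. induction l; simpl; [ring|]. rewrite IHl. ring. Qed.

Lemma sumL_zero F l : (forall q, In q l -> F q = C0) -> sumL F l = C0.
Proof. induction l; simpl; intros H; [reflexivity|]. rewrite H, IHl; auto. ring. Qed.

Lemma sumL_support F l1 : NoDup l1 -> forall l2, NoDup l2 ->
  (forall q, F q <> C0 -> (In q l1 <-> In q l2)) -> sumL F l1 = sumL F l2.
Proof.
  induction l1 as [|a l1 IH]; intros Hn1 l2 Hn2 H.
  - simpl. symmetry. apply sumL_zero. intros q Hq.
    destruct (classic (F q = C0)) as [E|E]; auto. apply H in E. simpl in E. tauto.
  - inversion Hn1; subst. simpl.
    destruct (classic (F a = C0)) as [E|E].
    + rewrite E, (IH H3 l2 Hn2). ring.
      intros q Hq. specialize (H q Hq). simpl in H.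
      assert (q <> a) by (intro; subst; tauto).
      split; intro HH; [apply H; right; exact HH|].
      apply H in HH. destruct HH as [HH|HH]; [congruence|exact HH].
    + assert (Ha : In a l2) by (apply (H a E); simpl; auto).
      destruct (in_split _ _ Ha) as [la [lb ->]].
      rewrite sumL_app. simpl. rewrite (IH H3 (la ++ lb)).
      * rewrite sumL_app. ring.
      * eapply NoDup_remove_1; eauto.
      * intros q Hq. specialize (H q Hq). simpl in H. rewrite in_app_iff in *. simpl in H.
        destruct (classic (q = a)) as [->|Nq].
        -- split; intro HH; [tauto|]. exfalso. apply (NoDup_remove_2 la lb a Hn2).
           rewrite in_app_iff; auto.
        -- split; intro HH.
           ++ assert (HH2: a = q \/ In q l1) by auto. apply H in HH2. destruct HH2 as [?|[?|?]]; auto; congruence.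
           ++ assert (HH2: In q la \/ a = q \/ In q lb) by intuition. apply H in HH2.
              destruct HH2 as [?|?]; [congruence|exact H0].
Qed.

Lemma sumL_delta F l p : NoDup l -> In p l -> (forall q, In q l -> q <> p -> F q = C0) ->
  sumL F l = F p.
Proof.
  intros Hn Hp H. transitivity (sumL F (p :: nil)).
  - apply sumL_support; auto. all: try (repeat constructor; simpl; tauto).
    intros q Hq. simpl. split; intro HH.
    + destruct (classic (q = p)) as [->|Np]; [simpl; auto|].
      exfalso; apply Hq; apply H; auto.
    + destruct HH as [<-|[]]; auto.
  - simpl. ring.
Qed.

Definition box (N : nat) := list_prod (zrange N) (zrange N).

Lemma boxsum_sumL N F : boxsum N F = sumL F (box N).
Proof. reflexivity. Qed.

Lemma In_zrange N k : In k (zrange N) <-> (- Z.of_nat N <= k <= Z.of_nat N)%Z.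
Proof.
  unfold zrange. rewrite in_map_iff. split.
  - intros [x [<- Hx]]. apply in_seq in Hx. lia.
  - intros H. exists (Z.to_nat (k + Z.of_nat N)). split; [lia|]. apply in_seq. lia.
Qed.

Lemma NoDup_zrange N : NoDup (zrange N).
Proof.
  unfold zrange. apply NoDup_map_NoDup_ForallPairs; [|apply seq_NoDup].
  intros x y _ _ H. lia.
Qed.

Lemma NoDup_prod (l1 l2 : list Z) : NoDup l1 -> NoDup l2 -> NoDup (list_prod l1 l2).
Proof.
  induction l1 as [|a l1 IH]; intros H1 H2; simpl; [constructor|].
  inversion H1; subst. apply NoDup_app.
  - apply NoDup_map_NoDup_ForallPairs; auto. intros x y _ _ H; injection H; auto.
  - apply IH; auto.
  - intros [x y] Hx Hy. apply in_map_iff in Hx. destruct Hx as [z [E _]]. injection E; intros; subst.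
    apply in_prod_iff in Hy. tauto.
Qed.

Lemma NoDup_box N : NoDup (box N).
Proof. apply NoDup_prod; apply NoDup_zrange. Qed.

Lemma In_box N q : In q (box N) <-> (Z.abs (fst q) <= Z.of_nat N /\ Z.abs (snd q) <= Z.of_nat N)%Z.
Proof.
  destruct q as [x y]. unfold box. rewrite in_prod_iff, !In_zrange. simpl. lia.
Qed.

Lemma supp_box a q : coef a q <> C0 -> In q (box (bnd a)).
Proof.
  intros H. apply In_box. destruct (Z_lt_le_dec (Z.of_nat (bnd a)) (Z.abs (fst q))).
  - exfalso; apply H; apply bnd_spec; auto.
  - destruct (Z_lt_le_dec (Z.of_nat (bnd a)) (Z.abs (snd q))).
    + exfalso; apply H; apply bnd_spec; auto.
    + auto.
Qed.

Lemma supp_boxN a q N : (bnd a <= N)%nat -> coef a q <> C0 -> In q (box N).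
Proof.
  intros HN H. apply supp_box, In_box in H. apply In_box. lia.
Qed.

Lemma Aext (a b : Aalg) : (forall p, coef a p = coef b p) -> a = b.
Proof.
  destruct a as [fa ha], b as [fb hb]. unfold coef; simpl. intros H.
  assert (fa = fb) by (apply functional_extensionality; auto). subst.
  f_equal. apply proof_irrelevance.
Qed.

Definition pdec (p q : Z * Z) : {p = q} + {p <> q}.
Proof. decide equality; apply Z.eq_dec. Defined.

Definition monoc (p : Z * Z) (q : Z * Z) : C := if pdec q p then C1 else C0.

Lemma mono_finsupp p : finsupp (monoc p).
Proof.
  exists (Z.to_nat (Z.abs (fst p) + Z.abs (snd p))). intros q Hq.
  unfold monoc. destruct (pdec q p); auto. subst. lia.
Qed.

Definition mono (p : Z * Z) : Aalg := exist _ (monoc p) (mono_finsupp p).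

Lemma coef_mono p q : coef (mono p) q = if pdec q p then C1 else C0.
Proof. reflexivity. Qed.

Lemma C1_neq_C0 : C1 <> C0.
Proof. unfold C1, C0. intro H. injection H. lra. Qed.

Lemma sumL_sum_box (F : Z * Z -> C) a N : (bnd a <= N)%nat -> (forall q, coef a q = C0 -> F q = C0) ->
  sumL F (box (bnd a)) = sumL F (box N).
Proof.
  intros HN HF. apply sumL_support; try apply NoDup_box.
  intros q Hq. assert (coef a q <> C0) by (intro E; apply Hq; auto).
  split; intros _; [eapply supp_boxN; eauto | apply supp_box; auto].
Qed.

Definition Azero (x : Aalg) : Aalg := Ascale C0 x.

Fixpoint xs (x : Aalg) (l : list (Z * Z)) : Aalg :=
  match l with
  | nil => Azero x
  | q :: l => Aadd (Ascale (coef x q) (mono q)) (xs x l)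
  end.

Lemma coef_xs x l p : coef (xs x l) p = sumL (fun q => Cmul (coef x q) (coef (mono q) p)) l.
Proof.
  induction l as [|q l IH]; simpl.
  - unfold Azero. simpl. unfold coef at 1. simpl. ring.
  - unfold coef at 1. simpl. fold (coef (xs x l) p). rewrite IH. reflexivity.
Qed.

Lemma xs_box x : xs x (box (bnd x)) = x.
Proof.
  apply Aext. intros p. rewrite coef_xs.
  destruct (classic (In p (box (bnd x)))) as [Hp|Hp].
  - rewrite (sumL_delta _ _ p (NoDup_box _) Hp).
    + rewrite coef_mono. destruct (pdec p p); [ring|congruence].
    + intros q _ Hq. rewrite coef_mono. destruct (pdec p q); [congruence|ring].
  - rewrite sumL_zero.
    + symmetry. destruct (classic (coef x p = C0)) as [E|E]; auto.
      exfalso; apply Hp; apply supp_box; auto.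
    + intros q Hq. rewrite coef_mono. destruct (pdec p q); [subst; contradiction|ring].
Qed.

Lemma decomp (G : Aalg -> C) (Hadd : forall a b, G (Aadd a b) = Cadd (G a) (G b))
  (Hsc : forall c a, G (Ascale c a) = Cmul c (G a)) x :
  G x = sumL (fun q => Cmul (coef x q) (G (mono q))) (box (bnd x)).
Proof.
  rewrite <- (xs_box x) at 1. generalize (box (bnd x)). intros l.
  induction l as [|q l IH]; simpl.
  - unfold Azero. rewrite Hsc. ring.
  - rewrite Hadd, Hsc, IH. reflexivity.
Qed.

Definition mterm th (a b : Aalg) (p q : Z * Z) : C :=
  Cmul (Cmul (ex th (snd q * (fst p - fst q))) (coef a q)) (coef b (fst p - fst q, snd p - snd q)%Z).

Lemma mulc_gen th a b p N : (bnd a <= N)%nat ->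
  coef (Amul th a b) p = sumL (mterm th a b p) (box N).
Proof.
  intros HN. change (coef (Amul th a b) p) with (mulc th a b p). unfold mulc.
  rewrite boxsum_sumL. rewrite <- (sumL_sum_box _ a N HN).
  - apply sumL_ext. intros q _. unfold mterm. rewrite Cpowz_lam. reflexivity.
  - intros q Hq. unfold mterm. rewrite Hq. ring.
Qed.

Lemma coef_add a b p : coef (Aadd a b) p = Cadd (coef a p) (coef b p).
Proof. reflexivity. Qed.
Lemma coef_scale c a p : coef (Ascale c a) p = Cmul c (coef a p).
Proof. reflexivity. Qed.

Lemma Amul_addl th a b x : Amul th (Aadd a b) x = Aadd (Amul th a x) (Amul th b x).
Proof.
  apply Aext. intros p. set (N := (bnd a + bnd b + bnd (Aadd a b))%nat).
  rewrite coef_add.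
  rewrite (mulc_gen th (Aadd a b) x p N) by lia.
  rewrite (mulc_gen th a x p N) by lia. rewrite (mulc_gen th b x p N) by lia.
  rewrite <- sumL_add. apply sumL_ext. intros q _. unfold mterm. rewrite coef_add. ring.
Qed.

Lemma Amul_scalel th c a x : Amul th (Ascale c a) x = Ascale c (Amul th a x).
Proof.
  apply Aext. intros p. set (N := (bnd a + bnd (Ascale c a))%nat).
  rewrite coef_scale.
  rewrite (mulc_gen th (Ascale c a) x p N) by lia.
  rewrite (mulc_gen th a x p N) by lia.
  rewrite <- sumL_scale. apply sumL_ext. intros q _. unfold mterm. rewrite coef_scale. ring.
Qed.

Lemma Amul_addr th a b x : Amul th x (Aadd a b) = Aadd (Amul th x a) (Amul th x b).
Proof.
  apply Aext. intros p. set (N := bnd x).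
  rewrite coef_add.
  rewrite (mulc_gen th x (Aadd a b) p N) by lia.
  rewrite (mulc_gen th x a p N) by lia. rewrite (mulc_gen th x b p N) by lia.
  rewrite <- sumL_add. apply sumL_ext. intros q _. unfold mterm. rewrite coef_add. ring.
Qed.

Lemma Amul_scaler th c a x : Amul th x (Ascale c a) = Ascale c (Amul th x a).
Proof.
  apply Aext. intros p. set (N := bnd x).
  rewrite coef_scale.
  rewrite (mulc_gen th x (Ascale c a) p N) by lia.
  rewrite (mulc_gen th x a p N) by lia.
  rewrite <- sumL_scale. apply sumL_ext. intros q _. unfold mterm. rewrite coef_scale. ring.
Qed.

Definition padd (p q : Z * Z) : Z * Z := (fst p + fst q, snd p + snd q)%Z.
Definition pneg (p : Z * Z) : Z * Z := (- fst p, - snd p)%Z.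
Definition cc th (p q : Z * Z) : C := ex th (snd p * fst q).

Lemma mono_in_box p : In p (box (bnd (mono p))).
Proof. apply supp_box. rewrite coef_mono. destruct (pdec p p); [apply C1_neq_C0|congruence]. Qed.

Lemma Amul_mono th p q : Amul th (mono p) (mono q) = Ascale (cc th p q) (mono (padd p q)).
Proof.
  apply Aext. intros s. rewrite coef_scale.
  rewrite (mulc_gen th (mono p) (mono q) s (bnd (mono p))) by lia.
  rewrite (sumL_delta _ _ p (NoDup_box _) (mono_in_box p)).
  - unfold mterm. rewrite !coef_mono. destruct (pdec p p) as [_|]; [|congruence].
    destruct (pdec (fst s - fst p, snd s - snd p)%Z q) as [E|E];
    destruct (pdec s (padd p q)) as [E'|E'].
    + replace (fst s - fst p)%Z with (fst q) by (rewrite <- E; reflexivity). unfold cc; ring.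
    + exfalso; apply E'; rewrite <- E; destruct s, p; unfold padd; simpl; f_equal; lia.
    + exfalso; apply E; rewrite E'; destruct q, p; unfold padd; simpl; f_equal; lia.
    + ring.
  - intros q' _ Hq. unfold mterm. rewrite coef_mono. destruct (pdec q' p); [congruence|ring].
Qed.

Lemma sigma_add a b : sigma (Aadd a b) = Aadd (sigma a) (sigma b).
Proof. apply Aext; reflexivity. Qed.
Lemma sigma_scale c a : sigma (Ascale c a) = Ascale c (sigma a).
Proof. apply Aext; reflexivity. Qed.
Lemma sigma_mono p : sigma (mono p) = mono (pneg p).
Proof.
  apply Aext. intros s. change (coef (sigma (mono p)) s) with (coef (mono p) (- fst s, - snd s)%Z).
  rewrite !coef_mono.
  destruct (pdec (- fst s, - snd s)%Z p) as [E|E];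
  destruct (pdec s (pneg p)) as [E'|E']; auto.
  - exfalso; apply E'; rewrite <- E; destruct s; unfold pneg; simpl; f_equal; lia.
  - exfalso; apply E; rewrite E'; destruct p; unfold pneg; simpl; f_equal; lia.
Qed.

Definition phif (f : Z * Z -> C) (x : Aalg) : C :=
  sumL (fun q => Cmul (coef x q) (f q)) (box (bnd x)).

Lemma phif_add f a b : phif f (Aadd a b) = Cadd (phif f a) (phif f b).
Proof.
  unfold phif. set (N := (bnd a + bnd b + bnd (Aadd a b))%nat).
  rewrite (sumL_sum_box _ (Aadd a b) N), (sumL_sum_box _ a N), (sumL_sum_box _ b N);
    try lia; try (intros q Hq; rewrite Hq; ring).
  rewrite <- sumL_add. apply sumL_ext. intros q _. rewrite coef_add. ring.
Qed.

Lemma phif_scale f c a : phif f (Ascale c a) = Cmul c (phif f a).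
Proof.
  unfold phif. set (N := (bnd a + bnd (Ascale c a))%nat).
  rewrite (sumL_sum_box _ (Ascale c a) N), (sumL_sum_box _ a N);
    try lia; try (intros q Hq; rewrite Hq; ring).
  rewrite <- sumL_scale. apply sumL_ext. intros q _. rewrite coef_scale. ring.
Qed.

Lemma phif_mono f p : phif f (mono p) = f p.
Proof.
  unfold phif. rewrite (sumL_delta _ _ p (NoDup_box _) (mono_in_box p)).
  - rewrite coef_mono. destruct (pdec p p); [ring|congruence].
  - intros q _ Hq. rewrite coef_mono. destruct (pdec q p); [congruence|ring].
Qed.

Definition Coc th (e : Z * Z -> Z * Z -> C) : Prop :=
  forall p q r, Cmul (cc th p q) (e (padd p q) r) =
    Cadd (Cmul (cc th r (pneg p)) (e q (padd r (pneg p)))) (Cmul (cc th q r) (e p (padd q r))).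

Definition delta th (f : Z * Z -> C) (p r : Z * Z) : C :=
  Csub (Cmul (cc th r (pneg p)) (f (padd r (pneg p)))) (Cmul (cc th p r) (f (padd p r))).

Lemma alg_id (A B E C' D I J K H F1 F2 F3 : C) :
  Cmul A B = Cmul C' D -> Cmul A E = Cmul J H -> Cmul C' I = Cmul J K ->
  Cmul A (Csub (Cmul B F1) (Cmul E F3)) =
  Cadd (Cmul C' (Csub (Cmul D F1) (Cmul I F2))) (Cmul J (Csub (Cmul K F2) (Cmul H F3))).
Proof.
  intros H1 H2 H3.
  replace (Cmul A (Csub (Cmul B F1) (Cmul E F3))) with
    (Csub (Cmul (Cmul A B) F1) (Cmul (Cmul A E) F3)) by ring.
  rewrite H1, H2.
  replace (Cadd (Cmul C' (Csub (Cmul D F1) (Cmul I F2))) (Cmul J (Csub (Cmul K F2) (Cmul H F3))))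
    with (Cadd (Csub (Cmul (Cmul C' D) F1) (Cmul (Cmul C' I) F2)) (Csub (Cmul (Cmul J K) F2) (Cmul (Cmul J H) F3))) by ring.
  rewrite H3. ring.
Qed.

Lemma delta_coc th f : Coc th (delta th f).
Proof.
  intros p q r. unfold delta.
  assert (E1 : padd (padd r (pneg p)) (pneg q) = padd r (pneg (padd p q)))
    by (destruct p, q, r; unfold padd, pneg; simpl; f_equal; ring).
  assert (E2 : padd q (padd r (pneg p)) = padd (padd q r) (pneg p))
    by (destruct p, q, r; unfold padd, pneg; simpl; f_equal; ring).
  assert (E3 : padd p (padd q r) = padd (padd p q) r)
    by (destruct p, q, r; unfold padd, pneg; simpl; f_equal; ring).
  rewrite E1, E2, E3. apply alg_id; unfold cc; rewrite !ex_add; f_equal;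
    destruct p, q, r; unfold padd, pneg; simpl; ring.
Qed.

Lemma coc_sub th d e : Coc th d -> Coc th e -> Coc th (fun p r => Csub (d p r) (e p r)).
Proof.
  intros Hd He p q r. specialize (Hd p q r). specialize (He p q r).
  replace (Cmul (cc th p q) (Csub (d (padd p q) r) (e (padd p q) r))) with
    (Csub (Cmul (cc th p q) (d (padd p q) r)) (Cmul (cc th p q) (e (padd p q) r))) by ring.
  rewrite Hd, He. ring.
Qed.

Lemma zind (P : Z -> Prop) : P 0%Z -> (forall z, P z -> P (z + 1)%Z) -> (forall z, P (z + 1)%Z -> P z) ->
  forall z, P z.
Proof.
  intros H0 Hf Hb. apply Z.peano_ind; auto.
  intros x Hx. apply Hb. replace (Z.pred x + 1)%Z with x by lia. exact Hx.
Qed.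

Lemma zind2 (P : Z -> Prop) : P 0%Z -> P 1%Z -> (forall z, P (z - 1)%Z -> P (z + 1)%Z) ->
  (forall z, P (z + 1)%Z -> P (z - 1)%Z) -> forall z, P z.
Proof.
  intros H0 H1 Hf Hb z.
  cut (P z /\ P (z + 1)%Z); [tauto|].
  revert z. apply zind.
  - auto.
  - intros z [Hz Hz1]. split; auto. replace (z + 1 + 1)%Z with ((z + 1) + 1)%Z by lia.
    apply Hf. replace (z + 1 - 1)%Z with z by lia. exact Hz.
  - intros z [Hz Hz1]. split; auto. replace z with ((z + 1) - 1)%Z by lia. apply Hb.
    replace (z + 1 + 1)%Z with (z + 1 + 1)%Z by lia. exact Hz1.
Qed.

Definition pu : Z * Z := (1, 0)%Z.
Definition pv : Z * Z := (0, 1)%Z.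

Lemma pair_eta (p : Z * Z) : (fst p, snd p) = p.
Proof. destruct p; reflexivity. Qed.

Lemma coc_zero th e : Coc th e -> (forall r, e pu r = C0) -> (forall r, e pv r = C0) ->
  forall p r, e p r = C0.
Proof.
  intros Hc Hu Hv.
  assert (Fw : forall g p, (forall r, e g r = C0) -> (forall r, e p r = C0) -> forall r, e (padd p g) r = C0).
  { intros g p Hg Hp r. specialize (Hc p g r). rewrite Hg, Hp in Hc.
    apply (ex_cancel th (snd p * fst g)). unfold cc in Hc. rewrite Hc. ring. }
  assert (Bw : forall g p, (forall r, e g r = C0) -> (forall r, e (padd p g) r = C0) -> forall r, e p r = C0).
  { intros g p Hg Hp r. specialize (Hc p g (padd r (pneg g))). rewrite Hg, Hp in Hc.
    replace (padd g (padd r (pneg g))) with r in Hc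
      by (destruct g, r; unfold padd, pneg; simpl; f_equal; ring).
    apply (ex_cancel th (snd g * fst (padd r (pneg g)))).
    unfold cc in Hc. match type of Hc with
    | Cmul ?Z C0 = Cadd (Cmul ?X C0) _ =>
      transitivity (Csub (Cadd (Cmul X C0) (Cmul (ex th (snd g * fst (padd r (pneg g)))) (e p r))) (Cmul X C0)); [ring|];
      rewrite <- Hc; ring end. }
  intros [a b].
  assert (Hcol : forall b, forall r, e (0, b)%Z r = C0).
  { apply (zind (fun b => forall r, e (0, b)%Z r = C0)).
    -
      intros r. specialize (Hc (0,0)%Z (0,0)%Z r).
      replace (padd (0, 0)%Z (0, 0)%Z) with (0,0)%Z in Hc by reflexivity.
      replace (padd r (pneg (0,0)%Z)) with r in Hc by (destruct r; unfold padd, pneg; simpl; f_equal; ring).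
      replace (padd (0,0)%Z r) with r in Hc by (destruct r; unfold padd, pneg; simpl; f_equal; ring).
      unfold cc in Hc. simpl in Hc. rewrite Z.mul_0_r, ex0 in Hc.
      set (x := e (0,0)%Z r) in *. clear - Hc.
      transitivity (Csub (Cadd (Cmul C1 x) (Cmul C1 x)) (Cmul C1 x)); [ring|].
      rewrite <- Hc. ring.
    - intros z Hz. replace (0, z + 1)%Z with (padd (0, z)%Z pv) by reflexivity.
      apply Fw; auto.
    - intros z Hz. apply (Bw pv); auto. }
  revert a. apply (zind (fun a => forall r, e (a, b)%Z r = C0)).
  - apply Hcol.
  - intros z Hz. replace (z + 1, b)%Z with (padd (z, b)%Z pu)
      by (unfold padd, pneg, pu; cbn [fst snd]; f_equal; ring). apply Fw; auto.
  - intros z Hz. apply (Bw pu); auto. intros r. rewrite <- (Hz r). f_equal.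
    unfold padd; simpl; f_equal; ring.
Qed.

Lemma coc_v th e : Coc th e -> (forall r, e pu r = C0) ->
  (forall m, e pv (0, m)%Z = C0) -> (forall m, e pv (1, m)%Z = C0) -> forall r, e pv r = C0.
Proof.
  intros Hc Hu H0 H1.
  assert (Rel : forall r, e pv (padd pu r) = Cmul (ex th (1 + snd r * -1)) (e pv (padd r (pneg pu)))).
  { intros r. pose proof (Hc pv pu r) as A. pose proof (Hc pu pv r) as B.
    replace (padd pv pu) with (1,1)%Z in A by reflexivity.
    replace (padd pu pv) with (1,1)%Z in B by reflexivity.
    rewrite Hu in A, B. unfold cc in A, B. simpl in A, B.
    rewrite ex0 in A, B.
    rewrite <- ex_add.
    transitivity (Cmul (ex th 1) (e (1,1)%Z r)).
    - rewrite A. ring.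
    - replace (e (1,1)%Z r) with (Cmul C1 (e (1,1)%Z r)) by ring. rewrite B. ring. }
  intros [k m]. revert m. revert k. apply (zind2 (fun k => forall m, e pv (k, m)%Z = C0)).
  - exact H0.
  - exact H1.
  - intros z Hz m. specialize (Rel (z, m)%Z).
    replace (padd pu (z, m)%Z) with (z + 1, m)%Z in Rel by (unfold padd, pneg, pu; cbn [fst snd]; f_equal; ring).
    replace (padd (z, m)%Z (pneg pu)) with (z - 1, m)%Z in Rel by (unfold padd, pneg, pu; cbn [fst snd]; f_equal; ring).
    rewrite Rel, Hz. ring.
  - intros z Hz m. specialize (Rel (z, m)%Z).
    replace (padd pu (z, m)%Z) with (z + 1, m)%Z in Rel by (unfold padd, pneg, pu; cbn [fst snd]; f_equal; ring).
    replace (padd (z, m)%Z (pneg pu)) with (z - 1, m)%Z in Rel by (unfold padd, pneg, pu; cbn [fst snd]; f_equal; ring).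
    rewrite Hz in Rel. apply (ex_cancel th (1 + snd (z, m) * -1)). symmetry. exact Rel.
Qed.

Definition X2 := (C * C)%type.

Fixpoint fwd (F : Z -> X2 -> X2) (x0 : X2) (n : nat) : X2 :=
  match n with O => x0 | S n => F (Z.of_nat n) (fwd F x0 n) end.
Fixpoint bwd (G : Z -> X2 -> X2) (x0 : X2) (n : nat) : X2 :=
  match n with O => x0 | S n => G (- Z.of_nat n - 1)%Z (bwd G x0 n) end.

Definition seqZ F G x0 (k : Z) : X2 :=
  if (k <? 0)%Z then bwd G x0 (Z.to_nat (- k)) else fwd F x0 (Z.to_nat k).

Lemma seqZ_step F G x0 : (forall k y, F k (G k y) = y) ->
  forall k, seqZ F G x0 (k + 1) = F k (seqZ F G x0 k).
Proof.
  intros HFG k. unfold seqZ.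
  destruct (Z.ltb_spec (k + 1) 0); destruct (Z.ltb_spec k 0); try lia.
  - replace (Z.to_nat (- k)) with (S (Z.to_nat (- (k + 1)))) by lia. simpl bwd.
    replace (- Z.of_nat (Z.to_nat (- (k + 1))) - 1)%Z with k by lia. rewrite HFG. reflexivity.
  - assert (k = -1)%Z by lia. subst. simpl. rewrite HFG. reflexivity.
  - replace (Z.to_nat (k + 1)) with (S (Z.to_nat k)) by lia. simpl fwd.
    rewrite Z2Nat.id by lia. reflexivity.
Qed.

Definition rstepF (a : Z -> Z) (b : Z -> C) th (k : Z) (s : X2) : X2 :=
  (snd s, Cadd (Cmul (ex th (a (k + 1)%Z)) (fst s)) (b (k + 1)%Z)).
Definition rstepG (a : Z -> Z) (b : Z -> C) th (k : Z) (s : X2) : X2 :=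
  (Cmul (ex th (- a (k + 1)%Z)) (Csub (snd s) (b (k + 1)%Z)), fst s).

Lemma rstep_inv a b th k y : rstepF a b th k (rstepG a b th k y) = y.
Proof.
  destruct y as [y z]. unfold rstepF, rstepG. simpl. f_equal.
  transitivity (Cadd (Cmul (Cmul (ex th (a (k + 1)%Z)) (ex th (- a (k + 1)%Z))) (Csub z (b (k + 1)%Z))) (b (k + 1)%Z)); [ring|].
  rewrite ex_add. replace (a (k + 1)%Z + - a (k + 1)%Z)%Z with 0%Z by lia. rewrite ex0. ring.
Qed.

Definition rec2 th (a : Z -> Z) (b : Z -> C) (h0 h1 : C) (k : Z) : C :=
  fst (seqZ (rstepF a b th) (rstepG a b th) (h0, h1) k).

Lemma rec2_0 th a b h0 h1 : rec2 th a b h0 h1 0 = h0.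
Proof. reflexivity. Qed.

Lemma rec2_1 th a b h0 h1 : rec2 th a b h0 h1 1 = h1.
Proof.
  unfold rec2. change 1%Z with (0 + 1)%Z. rewrite seqZ_step by apply rstep_inv. reflexivity.
Qed.

Lemma rec2_rec th a b h0 h1 j :
  rec2 th a b h0 h1 (j + 1) = Cadd (Cmul (ex th (a j)) (rec2 th a b h0 h1 (j - 1))) (b j).
Proof.
  unfold rec2. rewrite seqZ_step by apply rstep_inv.
  replace j with ((j - 1) + 1)%Z at 2 by lia.
  rewrite seqZ_step by apply rstep_inv. unfold rstepF. simpl.
  replace (j - 1 + 1)%Z with j by lia. reflexivity.
Qed.

Lemma Csub_eq0 x y : Csub x y = C0 -> x = y.
Proof. intros H. transitivity (Cadd (Csub x y) y); [ring|]. rewrite H. ring. Qed.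

Lemma construct th d : Coc th d -> exists f, forall p r, d p r = delta th f p r.
Proof.
  intros Hd.
  set (g0 := rec2 th (fun _ => 0%Z) (fun m => Copp (d pv (0, m)%Z)) C0 C0).
  set (g1 := rec2 th (fun _ => (-1)%Z) (fun m => Copp (Cmul (ex th (-1)) (d pv (1, m)%Z))) C0 C0).
  set (f := fun p : Z * Z => rec2 th (fun _ => (- snd p)%Z) (fun k => Copp (d pu (k, snd p)%Z))
              (g0 (snd p)) (g1 (snd p)) (fst p)).
  exists f.
  set (e := fun p r => Csub (d p r) (delta th f p r)).
  assert (He : Coc th e) by (apply coc_sub; auto; apply delta_coc).
  assert (Hu : forall r, e pu r = C0).
  { intros [k m]. unfold e, delta.
    replace (padd (k, m)%Z (pneg pu)) with (k - 1, m)%Z by (unfold padd, pneg, pu; cbn [fst snd]; f_equal; ring).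
    replace (padd pu (k, m)%Z) with (k + 1, m)%Z by (unfold padd, pneg, pu; cbn [fst snd]; f_equal; ring).
    unfold f. cbn [fst snd]. rewrite rec2_rec. unfold cc, pu, pneg. cbn [fst snd].
    replace (m * - (1))%Z with (- m)%Z by ring. rewrite ex0. ring. }
  assert (Hv0 : forall m, e pv (0, m)%Z = C0).
  { intros m. unfold e, delta.
    replace (padd (0, m)%Z (pneg pv)) with (0, m - 1)%Z by (unfold padd, pneg, pv; cbn [fst snd]; f_equal; ring).
    replace (padd pv (0, m)%Z) with (0, m + 1)%Z by (unfold padd, pneg, pv; cbn [fst snd]; f_equal; ring).
    unfold f. cbn [fst snd]. rewrite !rec2_0. unfold g0. rewrite rec2_rec.
    unfold cc, pv, pneg. cbn [fst snd]. replace (m * - 0)%Z with 0%Z by ring.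
    replace (1 * 0)%Z with 0%Z by reflexivity. rewrite !ex0. ring. }
  assert (Hv1 : forall m, e pv (1, m)%Z = C0).
  { intros m. unfold e, delta.
    replace (padd (1, m)%Z (pneg pv)) with (1, m - 1)%Z by (unfold padd, pneg, pv; cbn [fst snd]; f_equal; ring).
    replace (padd pv (1, m)%Z) with (1, m + 1)%Z by (unfold padd, pneg, pv; cbn [fst snd]; f_equal; ring).
    unfold f. cbn [fst snd]. rewrite !rec2_1. unfold g1. rewrite rec2_rec.
    unfold cc, pv, pneg. cbn [fst snd]. replace (m * - 0)%Z with 0%Z by ring. rewrite ex0.
    transitivity (Csub (Cmul (Csub C1 (Cmul (ex th (1 * 1)) (ex th (-1)))) (Csub (d (0, 1)%Z (1, m)%Z) (g1 (m - 1)%Z))) C0); [unfold g1, pv; ring|].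
    rewrite (ex_add th). replace (1 * 1 + -1)%Z with 0%Z by reflexivity. rewrite ex0. ring. }
  assert (Hv : forall r, e pv r = C0) by (apply (coc_v th); auto).
  intros p r. apply Csub_eq0. exact (coc_zero th e He Hu Hv p r).
Qed.

Theorem mainTheorem7 (theta : R) (Hirr : irrational theta) :
  H1_twisted_dual_vanishes theta.
Proof.
  clear Hirr. intros D [Hlin [Hadd Hsc]] Hco.
  set (d := fun p r => D (mono p) (mono r)).
  assert (Hd : Coc theta d).
  { intros p q r. unfold d. specialize (Hco (mono p) (mono q) (mono r)).
    unfold lact_tw, ract in Hco. rewrite sigma_mono, !Amul_mono in Hco.
    rewrite Hsc in Hco. rewrite (proj2 (Hlin (mono q))), (proj2 (Hlin (mono p))) in Hco.
    exact Hco. }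
  destruct (construct theta d Hd) as [f Hf].
  exists (phif f). split; [split; [apply phif_add|apply phif_scale]|].
  intros a x. unfold lact_tw, ract. apply Csub_eq0.
  set (g := fun a x => Csub (D a x) (Csub (phif f (Amul theta x (sigma a))) (phif f (Amul theta a x)))).
  change (g a x = C0).
  assert (Hm : forall p q, g (mono p) (mono q) = C0).
  { intros p q. unfold g. rewrite sigma_mono, !Amul_mono, !phif_scale, !phif_mono.
    change (D (mono p) (mono q)) with (d p q). rewrite Hf. unfold delta. ring. }
  rewrite (decomp (g a)).
  - apply sumL_zero. intros q _.
    rewrite (decomp (fun a => g a (mono q))).
    + rewrite sumL_zero; [ring|]. intros p _. rewrite Hm. ring.
    + intros b c. unfold g. rewrite Hadd, sigma_add, Amul_addr, Amul_addl, !phif_add. ring.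
    + intros c b. unfold g. rewrite Hsc, sigma_scale, Amul_scaler, Amul_scalel, !phif_scale. ring.
  - intros y z. unfold g. rewrite (proj1 (Hlin a)), Amul_addl, Amul_addr, !phif_add. ring.
  - intros c y. unfold g. rewrite (proj2 (Hlin a)), Amul_scalel, Amul_scaler, !phif_scale. ring.
Qed.
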